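(* Let $I_A$ and $I_B$ be two MatP instances with the same underlying graph $G=(W\cup F,E)$ that differ only in the preference order of a single agent $x\in W\cup F$. Let $e=\{x,y\}\in E$ and let $I_H$ be a hybrid instance of $(I_A,I_B)$ with respect to $e$. Let $M$ be a matching with $e\in M$. Then: (1) if $M$ is robust popular with respect to $I_A$ and $I_B$, then $M$ is popular for $I_H$; (2) if $M$ is robust dominant with respect to $I_A$ and $I_B$, then $M$ is dominant for $I_H$.
   Context: An instance $I$ of matchings under preferences (MatP) consists of a bipartite graph $G^I=(W\cup F,E^I)$ with disjoint finite vertex sets $W$ (workers) and $F$ (firms), whose elements are called agents, together with, for each agent $x$, a strict linear order $\succ_x^I$ (preference order) over the set $N_x^I$ of neighbors of $x$ in $G^I$. A matching is a set of pairwise disjoint edges; $M(x)$ denotes the partner of a matched agent $x$. Agent $x$ prefers $M$ over $M'$ if $x$ is matched in $M$ and unmatched in $M'$, or matched in both with $M(x)\succ_x M'(x)$. Define $\mathrm{vote}^I_x(M,M')=1$ if $x$ prefers $M$ over $M'$, $-1$ if $x$ prefers $M'$ over $M$, and $0$ otherwise, and the popularity margin $\phi^I(M,M')=\sum_{x\in W\cup F}\mathrm{vote}^I_x(M,M')$. A matching $M$ of $G^I$ is popular for $I$ if $\phi^I(M,M')\ge 0$ for every matching $M'$ of $G^I$; it is dominant for $I$ if it is popular and $\phi^I(M,M')>0$ for every matching $M'$ of $G^I$ with $|M'|>|M|$. For two instances $I_A,I_B$ on the same agent sets, a matching is robust popular (resp. robust dominant) with respect to $I_A$ and $I_B$ if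 it is popular (resp. dominant) for both $I_A$ and $I_B$. Hybrid instance: suppose $I_A,I_B$ have the same graph $G$ and differ only in the preferences of agent $x$, and let $e=\{x,y\}\in E$. Let $P^A=\{z: z\succ_x^{I_A} y\}$ and $P^B=\{z: z\succ_x^{I_B} y\}$. A hybrid instance $I_H$ of $(I_A,I_B)$ with respect to $e$ is the MatP instance on $G$ in which every agent $z\neq x$ has preference order $\succ_z^{I_A}$, and $x$ has any linear order $\succ'$ on $N_x$ such that $z\succ' y$ for all $z\in P^A\cup P^B$ and $y\succ' z$ for all $z\in N_x\setminus(P^A\cup P^B\cup\{y\})$. *)

(* Defs.v *)
From mathcomp Require Import all_boot all_order all_algebra.
Set Implicit Arguments. Unset Strict Implicit. Unset Printing Implicit Defensive.
Import GRing.Theory Num.Theory.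
Local Open Scope ring_scope.

Section MatP.
Variables (W F : finType).

Definition agent := (W + F)%type.

(* The bipartite graph is given by G : W -> F -> bool; a matching is a set of
   edges, each edge {w,f} represented as the pair (w,f). *)
Definition adjT (G : W -> F -> bool) (a b : agent) : bool :=
  match a, b with
  | inl w, inr f => G w f
  | inr f, inl w => G w f
  | _, _ => false
  end.

(* A preference profile: pref x a b  means  a >_x b. *)
Definition prefs := agent -> rel agent.

Definition strict_linear_on (G : W -> F -> bool) (x : agent) (r : rel agent) : Prop :=
  [/\ (forall a b, r a b -> adjT G x a && adjT G x b),
      (forall a, ~~ r a a),
      (forall a b c, r a b -> r b c -> r a c) &
      (forall a b, adjT G x a -> adjT G x b -> a != b -> r a b || r b a)].

Definition valid_instance (G : W -> F -> bool) (p : prefs) : Prop :=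
  forall x, strict_linear_on G x (p x).

Definition is_matching (G : W -> F -> bool) (M : {set W * F}) : Prop :=
  (forall e, e \in M -> G e.1 e.2) /\
  (forall e1 e2, e1 \in M -> e2 \in M -> e1 != e2 ->
      (e1.1 != e2.1) && (e1.2 != e2.2)).

Definition inM (M : {set W * F}) (a b : agent) : bool :=
  match a, b with
  | inl w, inr f => (w, f) \in M
  | inr f, inl w => (w, f) \in M
  | _, _ => false
  end.

Definition prefers (p : prefs) (M M' : {set W * F}) (x : agent) : bool :=
  [exists y, inM M x y && [forall y', inM M' x y' ==> p x y y']].

Definition vote (p : prefs) (M M' : {set W * F}) (x : agent) : int :=
  (prefers p M M' x)%:Z - (prefers p M' M x)%:Z.

Definition margin (p : prefs) (M M' : {set W * F}) : int :=
  \sum_(x : agent) vote p M M' x.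

Definition popular (G : W -> F -> bool) (p : prefs) (M : {set W * F}) : Prop :=
  is_matching G M /\
  forall M', is_matching G M' -> 0 <= margin p M M'.

Definition dominant (G : W -> F -> bool) (p : prefs) (M : {set W * F}) : Prop :=
  popular G p M /\
  forall M', is_matching G M' -> (#|M| < #|M'|)%N -> 0 < margin p M M'.

Definition differ_only_at (pA pB : prefs) (x : agent) : Prop :=
  forall z, z != x -> forall a b, pA z a b = pB z a b.

Definition hybrid (G : W -> F -> bool) (pA pB pH : prefs) (x y : agent) : Prop :=
  [/\ strict_linear_on G x (pH x),
      (forall z, z != x -> forall a b, pH z a b = pA z a b),
      (forall z, pA x z y || pB x z y -> pH x z y) &
      (forall z, adjT G x z -> ~~ (pA x z y || pB x z y) -> z != y -> pH x y z)].

End MatP.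

(* Main.v *)
Require Import Defs.
From mathcomp Require Import all_boot all_order all_algebra.
Set Implicit Arguments. Unset Strict Implicit. Unset Printing Implicit Defensive.
Import GRing.Theory Num.Theory.
Local Open Scope ring_scope.

Section Aux.
Variables (W F : finType).
Implicit Types (G : W -> F -> bool) (M : {set W * F}) (p q : prefs W F).

Lemma inM_uniq G M (x a b : agent W F) :
  is_matching G M -> inM M x a -> inM M x b -> a = b.
Proof.
move=> [_ H]; case: x => [w|f]; case: a => [w1|f1] //; case: b => [w2|f2] //=.
- move=> h1 h2; case: (eqVneq f1 f2) => [->//|ne].
  have : (w, f1) != (w, f2) by apply/negP => /eqP [] e; rewrite e eqxx in ne.
  by move/(H _ _ h1 h2); rewrite eqxx.
- move=> h1 h2; case: (eqVneq w1 w2) => [->//|ne].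
  have : (w1, f) != (w2, f) by apply/negP => /eqP [] e; rewrite e eqxx in ne.
  by move/(H _ _ h1 h2); rewrite eqxx andbF.
Qed.

Lemma inM_adj G M (x a : agent W F) : is_matching G M -> inM M x a -> adjT G x a.
Proof. by move=> [H _]; case: x => [w|f]; case: a => [w1|f1] //= /H. Qed.

Lemma prefers_ext p q M M' (z : agent W F) :
  (forall a b, p z a b = q z a b) -> prefers p M M' z = prefers q M M' z.
Proof.
move=> h; rewrite /prefers; apply: eq_existsb => a; congr (_ && _).
by apply: eq_forallb => b; rewrite h.
Qed.

Lemma vote_ext p q M M' (z : agent W F) :
  (forall a b, p z a b = q z a b) -> vote p M M' z = vote q M M' z.
Proof. by move=> h; rewrite /vote !(prefers_ext _ _ h). Qed.

Lemma vote_none G p M M' (x y : agent W F) :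
  is_matching G M -> inM M x y -> (forall z, ~~ inM M' x z) -> vote p M M' x = 1.
Proof.
move=> mM hy hn; rewrite /vote.
have -> : prefers p M M' x.
  apply/existsP; exists y; rewrite hy /=; apply/forallP => b.
  by rewrite (negbTE (hn b)).
have -> : prefers p M' M x = false.
  by apply/negbTE/negP => /existsP [b /andP [hb _]]; rewrite (negbTE (hn b)) in hb.
by [].
Qed.

Lemma vote_some G p M M' (x y z : agent W F) :
  is_matching G M -> is_matching G M' -> inM M x y -> inM M' x z ->
  vote p M M' x = (p x y z)%:Z - (p x z y)%:Z.
Proof.
move=> mM mM' hy hz; rewrite /vote.
have -> : prefers p M M' x = p x y z.
  apply/idP/idP.
  - move/existsP => [a /andP [ha /forallP /(_ z)]].
    by rewrite hz (inM_uniq mM ha hy).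
  - move=> h; apply/existsP; exists y; rewrite hy /=; apply/forallP => b.
    by apply/implyP => hb; rewrite (inM_uniq mM' hb hz).
have -> : prefers p M' M x = p x z y.
  apply/idP/idP.
  - move/existsP => [a /andP [ha /forallP /(_ y)]].
    by rewrite hy (inM_uniq mM' ha hz).
  - move=> h; apply/existsP; exists z; rewrite hz /=; apply/forallP => b.
    by apply/implyP => hb; rewrite (inM_uniq mM hb hy).
by [].
Qed.

Lemma margin_split p M M' (x : agent W F) :
  margin p M M' = vote p M M' x + \sum_(z | z != x) vote p M M' z.
Proof. by rewrite /margin (bigD1 x). Qed.

End Aux.

Theorem lemma2 (W F : finType) (G : W -> F -> bool) (pA pB pH : prefs W F)
  (x y : agent W F) (M : {set W * F}) :
  valid_instance G pA -> valid_instance G pB ->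
  differ_only_at pA pB x ->
  adjT G x y ->
  hybrid G pA pB pH x y ->
  is_matching G M -> inM M x y ->
  ((popular G pA M /\ popular G pB M) -> popular G pH M) /\
  ((dominant G pA M /\ dominant G pB M) -> dominant G pH M).
Proof.
move=> vA vB dAB adjxy [[_ irrH trH totH] hHo hHp hHn] mM hxy.
have key : forall M', is_matching G M' ->
    margin pA M M' <= margin pH M M' \/ margin pB M M' <= margin pH M M'.
  move=> M' mM'.
  rewrite (margin_split pA _ _ x) (margin_split pB _ _ x) (margin_split pH _ _ x).
  have EA : \sum_(z | z != x) vote pH M M' z = \sum_(z | z != x) vote pA M M' z.
    by apply: eq_bigr => z hz; apply: vote_ext; apply: hHo.
  have EB : \sum_(z | z != x) vote pB M M' z = \sum_(z | z != x) vote pA M M' z.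
    by apply: eq_bigr => z hz; apply: vote_ext => a b; rewrite dAB.
  rewrite EA EB !lerD2r.
  have [z hz|hn] := pickP (fun z => inM M' x z); last first.
    by left; rewrite !(vote_none _ mM hxy) // => z; rewrite hn.
  rewrite !(vote_some _ mM mM' hxy hz).
  have [_ irrA trA _] := vA x; have [_ irrB trB _] := vB x.
  case hA: (pA x z y).
    have hH : pH x z y by apply: hHp; rewrite hA.
    have nA : pA x y z = false by apply/negP => h; move: (irrA z); rewrite (trA _ _ _ hA h).
    have nH : pH x y z = false by apply/negP => h; move: (irrH z); rewrite (trH _ _ _ hH h).
    by left; rewrite nA nH hH.
  case hB: (pB x z y).
    have hH : pH x z y by apply: hHp; rewrite hB orbT.
    have nB : pB x y z = false by apply/negP => h; move: (irrB z); rewrite (trB _ _ _ hB h).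
    have nH : pH x y z = false by apply/negP => h; move: (irrH z); rewrite (trH _ _ _ hH h).
    by right; rewrite nB nH hH.
  case: (eqVneq z y) => [->|nzy].
    by left; rewrite (negbTE (irrA y)) (negbTE (irrH y)).
  have hH : pH x y z by apply: hHn => //; [apply: (inM_adj mM' hz) | rewrite hA hB].
  have nH : pH x z y = false by apply/negP => h; move: (irrH z); rewrite (trH _ _ _ h hH).
  left; rewrite hH nH /=; case: (pA x y z) => //.
split.
  move=> [[_ pa] [_ pb]]; split => // M' mM'.
  by case: (key M' mM') => h; [apply: Order.POrderTheory.le_trans (pa _ mM') h | apply: Order.POrderTheory.le_trans (pb _ mM') h].
move=> [[[_ pa] da] [[_ pb] db]]; split; first split => // M' mM'.
  by case: (key M' mM') => h; [apply: Order.POrderTheory.le_trans (pa _ mM') h | apply: Order.POrderTheory.le_trans (pb _ mM') h].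
move=> M' mM' lt.
by case: (key M' mM') => h; [apply: Order.POrderTheory.lt_le_trans (da _ mM' lt) h | apply: Order.POrderTheory.lt_le_trans (db _ mM' lt) h].
Qed.
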